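(* Let $m\ge 3$ and let $C_1,\dots,C_m\subset\mathbb{R}^n$ be nonempty, closed, convex sets in general position, $C=C_1\times\cdots\times C_m$, and $D(x)=\sum_{i=1}^m\|x_i-x_{i+1}\|$ with $x_{m+1}=x_1$. Then $$\inf_{x\in C}D(x)=\inf\{D(x_1,\dots,x_m): x_i\in\operatorname{bd}(C_i),\ 1\le i\le m\},$$ and every minimizer $x^*=(x_1^*,\dots,x_m^* )$ of $D$ over $C$ satisfies $x_i^*\in\operatorname{bd}(C_i)$ for all $i$.
   Context: The family $C_1,\dots,C_m$ is in general position if for every $i$, $C_i\cap\operatorname{conv}\big(\bigcup_{j\ne i}C_j\big)=\varnothing$. $\operatorname{bd}$ denotes the boundary in $\mathbb{R}^n$. *)

(* Defs.v *)
From HB Require Import structures.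
From mathcomp Require Import all_boot all_order all_algebra.
From mathcomp Require Import all_classical all_reals all_analysis.
Set Implicit Arguments. Unset Strict Implicit. Unset Printing Implicit Defensive.
Import Order.TTheory GRing.Theory Num.Theory.
Import numFieldTopology.Exports numFieldNormedType.Exports.
Local Open Scope classical_set_scope.
Local Open Scope ring_scope.

Section Defs.
Variables (R : realType) (n : nat).

Definition eucl_norm (v : 'rV[R]_n) : R := Num.sqrt (\sum_(i < n) (v ord0 i) ^+ 2).

Definition convex (A : set 'rV[R]_n) : Prop :=
  forall x y (t : R), A x -> A y -> 0 <= t -> t <= 1 -> A ((1 - t) *: x + t *: y).

Definition conv (S : set 'rV[R]_n) : set 'rV[R]_n :=
  [set y | exists (k : nat) (l : 'I_k -> R) (p : 'I_k -> 'rV[R]_n),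
     [/\ (forall j, 0 <= l j), \sum_(j < k) l j = 1, (forall j, S (p j))
       & y = \sum_(j < k) l j *: p j]].

Definition bd (A : set 'rV[R]_n) : set 'rV[R]_n := closure A `\` interior A.

Variable m : nat.

Definition general_position (C : 'I_m -> set 'rV[R]_n) : Prop :=
  forall i, C i `&` conv (\bigcup_(j in [set j | j != i]) C j) = set0.

Definition prodset (C : 'I_m -> set 'rV[R]_n) : set ('I_m -> 'rV[R]_n) :=
  [set x | forall i, C i (x i)].

Definition cycD (x : 'I_m -> 'rV[R]_n) : R :=
  \sum_(i < m) eucl_norm (x i - x (ordS i)).

End Defs.

(* Main.v *)
Require Import Defs.
From HB Require Import structures.
From mathcomp Require Import all_boot all_order all_algebra.
From mathcomp Require Import all_classical all_reals all_analysis.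
From mathcomp Require Import ring lra zify.
Import Order.TTheory GRing.Theory Num.Theory.
Import numFieldTopology.Exports numFieldNormedType.Exports.
Local Open Scope classical_set_scope.
Local Open Scope ring_scope.
Set Implicit Arguments. Unset Strict Implicit.



Section Norm.
Variables (R : realType) (n : nat).
Implicit Types u v w : 'rV[R]_n.

Definition dot u v : R := \sum_(i < n) u ord0 i * v ord0 i.
Local Notation N := (@eucl_norm R n).

Lemma NE u : N u = Num.sqrt (dot u u).
Proof. by rewrite /eucl_norm /dot; congr Num.sqrt; apply: eq_bigr => i _; rewrite expr2. Qed.

Lemma dot_ge0 u : 0 <= dot u u.
Proof. by apply: sumr_ge0 => i _; rewrite -expr2 sqr_ge0. Qed.

Lemma dotC u v : dot u v = dot v u.
Proof. by apply: eq_bigr => i _; rewrite mulrC. Qed.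

Lemma dotDZl a b u v w : dot (a *: u + b *: v) w = a * dot u w + b * dot v w.
Proof.
rewrite /dot !mulr_sumr -big_split /=; apply: eq_bigr => i _.
by rewrite !mxE; ring.
Qed.

Lemma dotDZr a b u v w : dot w (a *: u + b *: v) = a * dot w u + b * dot w v.
Proof. by rewrite dotC dotDZl (dotC u) (dotC v). Qed.

Lemma dot0 u : dot u u = 0 -> u = 0.
Proof.
move=> h; apply/rowP => i; rewrite mxE.
have /psumr_eq0P P := h.
have : u ord0 i * u ord0 i = 0 by apply: P => // j _; rewrite -expr2 sqr_ge0.
by move/eqP; rewrite mulf_eq0 orbb => /eqP.
Qed.

Lemma N_ge0 u : 0 <= N u.
Proof. by rewrite NE sqrtr_ge0. Qed.

Lemma N_sq u : N u ^+ 2 = dot u u.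
Proof. by rewrite NE sqr_sqrtr // dot_ge0. Qed.

Lemma CS2 u v : dot u v ^+ 2 <= dot u u * dot v v.
Proof.
have h := dot_ge0 (dot v v *: u + (- dot u v) *: v).
rewrite dotDZl !dotDZr (dotC v u) in h.
have e : dot v v * (dot v v * dot u u + - dot u v * dot u v) +
    - dot u v * (dot v v * dot u v + - dot u v * dot v v)
   = dot v v * (dot u u * dot v v - dot u v ^+ 2) by ring.
rewrite e in h.
have [vv0|vv0] := eqVneq (dot v v) 0.
  have e0 : dot u v = 0.
    by rewrite (@dot0 v vv0) /dot big1 // => i _; rewrite mxE mulr0.
  by rewrite e0 vv0 expr0n mulr0.
have vp : 0 < dot v v by rewrite lt_neqAle eq_sym vv0 dot_ge0.
by rewrite -subr_ge0 -(pmulr_rge0 _ vp).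
Qed.

Lemma CS u v : dot u v <= N u * N v.
Proof.
rewrite !NE -sqrtrM ?dot_ge0 //.
rewrite (le_trans (ler_norm _)) // -sqrtr_sqr ler_sqrt ?CS2 //.
by rewrite mulr_ge0 ?dot_ge0.
Qed.

Lemma dotDD u v : dot (u + v) (u + v) = dot u u + 2 * dot u v + dot v v.
Proof.
rewrite /dot mulr_sumr -!big_split /=; apply: eq_bigr => i _.
rewrite !mxE; ring.
Qed.

Lemma N_triangle u v : N (u + v) <= N u + N v.
Proof.
rewrite NE -(ger0_norm (addr_ge0 (N_ge0 u) (N_ge0 v))) -sqrtr_sqr ler_sqrt ?sqr_ge0 //.
rewrite dotDD sqrrD !N_sq -mulr_natl.
have := CS u v; lra.
Qed.

Lemma NZ a u : N (a *: u) = `|a| * N u.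
Proof.
rewrite !NE; have -> : a *: u = a *: u + 0 *: u by rewrite scale0r addr0.
rewrite dotDZl !dotDZr !mul0r !addr0 mulrA -expr2 sqrtrM ?sqr_ge0 // sqrtr_sqr //.
Qed.

Lemma NN u : N (- u) = N u.
Proof. by rewrite -scaleN1r NZ normrN1 mul1r. Qed.

Lemma NB u v : N (u - v) = N (v - u).
Proof. by rewrite -NN opprB. Qed.

Lemma N_eq u v : N (u + v) = N u + N v -> N v *: u = N u *: v.
Proof.
move=> h.
have h2 : dot u v = N u * N v.
  have := congr1 (fun x => x ^+ 2) h; rewrite /= N_sq dotDD sqrrD !N_sq.
  rewrite -mulr_natl; lra.
apply/eqP; rewrite -subr_eq0; apply/eqP; apply: dot0.
rewrite -scaleNr dotDZl !dotDZr (dotC v u) h2 -!N_sq; ring.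
Qed.

End Norm.



Section Geo.
Variables (R : realType) (n : nat).
Local Notation N := (@eucl_norm R n).

Definition phi (z a : 'rV[R]_n) (t : R) := z + t *: (a - z).

Lemma phi_cont z a : continuous (phi z a).
Proof.
move=> t.
change {for t, continuous ((fun _ => z) + (fun s => s *: (a - z)))}.
apply: continuousD; last exact: scalel_continuous.
by move=> ?; apply: cvg_cst.
Qed.

Lemma phi0 z a : phi z a 0 = z.
Proof. by rewrite /phi scale0r addr0. Qed.

Lemma phi1 z a : phi z a 1 = a.
Proof. by rewrite /phi scale1r addrC subrK. Qed.

Lemma seg_ineq z a b t : 0 <= t <= 1 ->
  N (a - phi z a t) + N (phi z a t - b) <=
  (1 - t) * (N (a - z) + N (z - b)) + t * N (a - b).
Proof.
move=> /andP[t0 t1].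
have e1 : a - phi z a t = (1 - t) *: (a - z).
  by apply/rowP => j; rewrite !mxE; ring.
have e2 : phi z a t - b = (1 - t) *: (z - b) + t *: (a - b).
  by apply/rowP => j; rewrite !mxE; ring.
rewrite e1 e2 NZ ger0_norm ?subr_ge0 //.
have := N_triangle ((1 - t) *: (z - b)) (t *: (a - b)).
rewrite !NZ !ger0_norm ?subr_ge0 //; lra.
Qed.

Lemma seg_dec z a b t : 0 <= t <= 1 ->
  N (a - phi z a t) + N (phi z a t - b) <= N (a - z) + N (z - b).
Proof.
move=> tt; have h1 := seg_ineq z a b tt.
have h : N (a - b) <= N (a - z) + N (z - b).
  by have := N_triangle (a - z) (z - b); rewrite addrA subrK.
move: tt => /andP[t0 t1].
have := N_ge0 (a - z); have := N_ge0 (z - b); nra.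
Qed.

Lemma seg_bd (A : set 'rV[R]_n) z a : closed A -> A z -> ~ A a ->
  exists t : R, 0 <= t <= 1 /\ bd A (phi z a t).
Proof.
move=> Acl Az Aa.
pose T := ([set t : R | 0 <= t] `&` [set t | t <= 1]) `&` (phi z a @^-1` A).
have Tcl : closed T.
  apply: closedI; first by apply: closedI; [exact: closed_ge | exact: closed_le].
  by apply: preimage_closed => // t _; exact: phi_cont.
have T0 : T 0 by split; [split => //=; lra | rewrite /= phi0].
have Tub : ubound T 1 by move=> t [[_ ?] _].
have Tsup : has_sup T by split; [exists 0 | exists 1].
have Ts : T (sup T).
  have := closure_sup (ex_intro _ 0 T0) (ex_intro _ 1 Tub).
  by rewrite -(proj1 (closure_id T) Tcl).
case: (Ts) => [[s0 s1] As]; rewrite /= in s0 s1.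
exists (sup T); split; first by rewrite s0 s1.
split; first exact: subset_closure.
move=> hint.
have := @phi_cont z a (sup T) A hint => /nbhs_ballP [e /= e0 He].
have s1' : sup T < 1.
  rewrite lt_neqAle s1 andbT; apply/eqP => se.
  by apply: Aa; rewrite -(phi1 z a) -se.
pose d := Num.min (e / 2) (1 - sup T).
have d0 : 0 < d by rewrite lt_min divr_gt0 // subr_gt0 s1'.
have de : d <= e / 2 by rewrite ge_min lexx.
have d1 : d <= 1 - sup T by rewrite ge_min lexx orbT.
have Tt : T (sup T + d).
  split; first by split => /=; lra.
  apply: He; rewrite /ball /= opprD addrA subrr add0r normrN ger0_norm; last lra.
  lra.
have := sup_upper_bound Tsup Tt; lra.
Qed.

End Geo.



Section Main.
Variables (R : realType) (n m : nat).
Local Notation N := (@eucl_norm R n).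
Local Notation V := 'rV[R]_n.

Lemma int_step (A : set V) z a : interior A z ->
  exists t : R, 0 < t <= 1 /\ A (phi z a t).
Proof.
move=> hint; rewrite -(phi0 z a) in hint.
have := @phi_cont _ _ z a 0 A hint => /nbhs_ballP [e /= e0 He].
pose t := Num.min (e / 2) 1.
have t0 : 0 < t by rewrite lt_min divr_gt0 // ltr01.
have te : t <= e / 2 by rewrite ge_min lexx.
have t1 : t <= 1 by rewrite ge_min lexx orbT.
exists t; split; first by rewrite t0 t1.
apply: He; rewrite /ball /= sub0r normrN ger0_norm; lra.
Qed.

Lemma ordS_neq (i : 'I_m) : (1 < m)%N -> ordS i != i.
Proof.
move=> hm; apply/eqP => /(congr1 val) /=.
have hi := ltn_ord i.
case: (ltngtP i.+1 m) => h.
- by rewrite modn_small //; lia.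
- lia.
- rewrite h modnn; lia.
Qed.

Lemma pred_neq (i : 'I_m) : (1 < m)%N -> ord_pred i != i.
Proof.
move=> hm; apply/eqP => e.
have := ordS_neq i hm; rewrite -{1}e ord_predK eqxx //.
Qed.

Lemma cycD_split (x : 'I_m -> V) i : (1 < m)%N ->
  cycD x = N (x i - x (ordS i)) + N (x (ord_pred i) - x i)
    + \sum_(j | (j != i) && (j != ord_pred i)) N (x j - x (ordS j)).
Proof.
move=> hm; rewrite /cycD (bigD1 i) //= (bigD1 (ord_pred i)) /=.
  by rewrite ord_predK addrA.
by rewrite pred_neq.
Qed.

Definition upd (x : 'I_m -> V) i q := fun j => if j == i then q else x j.

Lemma cycD_upd (x : 'I_m -> V) i q : (1 < m)%N ->
  cycD (upd x i q) + (N (x (ord_pred i) - x i) + N (x i - x (ordS i)))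
  = cycD x + (N (x (ord_pred i) - q) + N (q - x (ordS i))).
Proof.
move=> hm; rewrite (cycD_split (upd x i q) i hm) (cycD_split x i hm).
have -> : \sum_(j | (j != i) && (j != ord_pred i)) N (upd x i q j - upd x i q (ordS j))
  = \sum_(j | (j != i) && (j != ord_pred i)) N (x j - x (ordS j)).
  apply: eq_bigr => j /andP[ji jp]; rewrite /upd (negbTE ji).
  case: eqP => // e; by move: jp; rewrite -e ordSK eqxx.
rewrite /upd eqxx (negbTE (ordS_neq i hm)) (negbTE (pred_neq i hm)).
lra.
Qed.

End Main.



Section Conv.
Variables (R : realType) (n : nat).
Local Notation V := 'rV[R]_n.

Lemma conv1 (S : set V) a : S a -> Defs.conv S a.
Proof.
move=> Sa; exists 1%N, (fun _ => 1), (fun _ => a); split.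
- by move=> _; exact: ler01.
- by rewrite big_ord1.
- by [].
- by rewrite big_ord1 scale1r.
Qed.

Lemma conv2 (S : set V) a b (l0 l1 : R) : S a -> S b -> 0 <= l0 -> 0 <= l1 ->
  l0 + l1 = 1 -> Defs.conv S (l0 *: a + l1 *: b).
Proof.
move=> Sa Sb h0 h1 hs.
exists 2%N, (fun j : 'I_2 => if j == ord0 then l0 else l1),
  (fun j : 'I_2 => if j == ord0 then a else b); split.
- by move=> j; case: ifP.
- by rewrite !big_ord_recl big_ord0 /= addr0.
- by move=> j; case: ifP.
- by rewrite !big_ord_recl big_ord0 /= addr0.
Qed.

Lemma N0 (u : V) : eucl_norm u = 0 -> u = 0.
Proof.
rewrite NE => /eqP; rewrite sqrtr_eq0 => h; apply: dot0.
by apply/eqP; rewrite eq_le h dot_ge0.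
Qed.

End Conv.

Section Thm.
Variables (R : realType) (n m : nat) (C : 'I_m -> set 'rV[R]_n).
Local Notation N := (@eucl_norm R n).
Local Notation V := 'rV[R]_n.
Hypotheses (hm : (3 <= m)%N) (Cne : forall i, C i !=set0)
  (Ccl : forall i, closed (C i)) (gp : general_position C).

Lemma hm1 : (1 < m)%N. Proof. by apply: leq_trans hm. Qed.

Lemma gp_false i w : C i w -> Defs.conv (\bigcup_(j in [set j | j != i]) C j) w -> False.
Proof.
move=> h1 h2; have : (C i `&` Defs.conv (\bigcup_(j in [set j | j != i]) C j)) w by [].
by rewrite gp.
Qed.

Lemma in_union i j w : j != i -> C j w -> (\bigcup_(k in [set k | k != i]) C k) w.
Proof. by move=> ji h; exists j. Qed.

Lemma bd_sub i w : bd (C i) w -> C i w.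
Proof.
have e := proj1 (closure_id (C i)) (@Ccl i).
by move=> [h _]; rewrite e.
Qed.

Lemma cycD_ge0 (x : 'I_m -> V) : 0 <= cycD x.
Proof. by apply: sumr_ge0 => i _; exact: N_ge0. Qed.

Lemma step (x : 'I_m -> V) i : prodset C x ->
  exists y, [/\ prodset C y, cycD y <= cycD x, bd (C i) (y i)
    & forall j, j != i -> y j = x j].
Proof.
move=> hx.
have na : ~ C i (x (ord_pred i)).
  move=> h; apply: (gp_false h); apply: conv1; apply: (in_union (pred_neq i hm1)).
  exact: hx.
have [t [tt hb]] := seg_bd (@Ccl i) (hx i) na.
exists (upd x i (phi (x i) (x (ord_pred i)) t)); split.
- by move=> j; rewrite /upd; case: eqP => [->|_]; [exact: bd_sub | exact: hx].
- have := cycD_upd x i (phi (x i) (x (ord_pred i)) t) hm1.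
  have := seg_dec (x i) (x (ord_pred i)) (x (ordS i)) tt; lra.
- by rewrite /upd eqxx.
- by move=> j ji; rewrite /upd (negbTE ji).
Qed.

Lemma reduce (x : 'I_m -> V) : prodset C x ->
  exists y, prodset (fun i => bd (C i)) y /\ cycD y <= cycD x.
Proof.
move=> hx.
suff : forall k, (k <= m)%N -> exists y, [/\ prodset C y, cycD y <= cycD x &
   forall j : 'I_m, (j < k)%N -> bd (C j) (y j)].
  move=> /(_ m (leqnn m)) [y [hy hc hb]]; exists y; split => // j.
  exact: hb.
elim => [|k IH] hk.
  by exists x; split.
have [y [hy hc hb]] := IH (ltnW hk).
have [y' [hy' hc' hb' he]] := step (Ordinal hk) hy.
exists y'; split => //; first exact: le_trans hc' hc.
move=> j hj; case: (eqVneq j (Ordinal hk)) => [->//|jk].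
rewrite he //; apply: hb.
move: hj; rewrite ltnS leq_eqVlt => /orP[/eqP e|//].
by move/eqP: jk; case; apply: val_inj.
Qed.

Lemma minimizer_bd (xs : 'I_m -> V) : prodset C xs ->
  (forall y, prodset C y -> cycD xs <= cycD y) -> forall i, bd (C i) (xs i).
Proof.
move=> hx hmin i; split; first exact: subset_closure.
move=> hint.
set z := xs i; set a := xs (ord_pred i); set b := xs (ordS i).
have [t [/andP [t0 t1] ht]] := int_step a hint.
have hy : prodset C (upd xs i (phi z a t)).
  by move=> j; rewrite /upd; case: eqP => [->//|_]; exact: hx.
have h1 := hmin _ hy.
have h2 := cycD_upd xs i (phi z a t) hm1.
have tt : 0 <= t <= 1 by rewrite ltW.
have h3 := seg_ineq z a b tt.
have h4 : t * (N (a - z) + N (z - b)) <= t * N (a - b).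
  rewrite -/z -/a -/b in h2; lra.
rewrite ler_pM2l // in h4.
have h5 : N ((a - z) + (z - b)) = N (a - z) + N (z - b).
  apply/le_anti; rewrite N_triangle /=.
  by rewrite addrA subrK.
have h6 := N_eq h5.
have ga := N_ge0 (a - z); have gb := N_ge0 (z - b).
have ain : (\bigcup_(k in [set k | k != i]) C k) a.
  exact: (in_union (pred_neq i hm1) (hx _)).
have bin : (\bigcup_(k in [set k | k != i]) C k) b.
  exact: (in_union (ordS_neq i hm1) (hx _)).
apply: (gp_false (interior_subset hint)).
change (Defs.conv (\bigcup_(k in [set k | k != i]) C k) z).
have [s0|s0] := eqVneq (N (a - z) + N (z - b)) 0.
  have : N (a - z) = 0 by lra.
  move/N0/eqP; rewrite subr_eq0 => /eqP <-.
  exact: conv1.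
set al := N (a - z) in h6 s0 ga *; set be := N (z - b) in h6 s0 gb *.
have sp : 0 < al + be by rewrite lt_neqAle eq_sym s0 addr_ge0.
have -> : z = (be / (al + be)) *: a + (al / (al + be)) *: b.
  apply/rowP => j; have := congr1 (fun M : V => M ord0 j) h6.
  rewrite !mxE => ej.
  apply/eqP; rewrite -subr_eq0; apply/eqP.
  have -> : z ord0 j - (be / (al + be) * a ord0 j + al / (al + be) * b ord0 j)
     = - (be * (a ord0 j - z ord0 j) - al * (z ord0 j - b ord0 j)) / (al + be).
    by field; rewrite lt0r_neq0.
  by rewrite ej subrr oppr0 mul0r.
apply: conv2 => //; try by rewrite divr_ge0 // ltW.
by rewrite -mulrDl addrC divff // lt0r_neq0.
Qed.

End Thm.

Theorem mainTheorem3 (R : realType) (n m : nat) (C : 'I_m -> set 'rV[R]_n) :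
  (3 <= m)%N ->
  (forall i, C i !=set0) ->
  (forall i, closed (C i)) ->
  (forall i, convex (C i)) ->
  general_position C ->
  inf [set cycD x | x in prodset C]
    = inf [set cycD x | x in prodset (fun i => bd (C i))] /\
  (forall xs : 'I_m -> 'rV[R]_n,
     prodset C xs ->
     (forall y, prodset C y -> cycD xs <= cycD y) ->
     forall i, bd (C i) (xs i)).
Proof.
move=> hm Cne Ccl _ gp; split; last exact: (minimizer_bd hm gp).
have [x0 hx0] : exists x : 'I_m -> 'rV[R]_n, prodset C x.
  by have [f hf] := choice (fun i => Cne i); exists f.
have [y0 [hy0 _]] := reduce hm Ccl gp hx0.
have lbS : has_lbound [set cycD x | x in prodset C].
  by exists 0 => _ [x _ <-]; exact: cycD_ge0.
have lbB : has_lbound [set cycD x | x in prodset (fun i => bd (C i))].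
  by exists 0 => _ [x _ <-]; exact: cycD_ge0.
apply/le_anti/andP; split.
- apply: lb_le_inf; first by exists (cycD y0), y0.
  move=> _ [y hy <-]; apply: (ge_inf lbS); exists y => // i.
  exact: (bd_sub Ccl (hy i)).
- apply: lb_le_inf; first by exists (cycD x0), x0.
  move=> _ [x hx <-].
  have [y [hy hc]] := reduce hm Ccl gp hx.
  apply: le_trans hc; apply: (ge_inf lbB); by exists y.
Qed.
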